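(* Let $\Phi$ be the set of formulas of $NOM$ and let $[\![\cdot]\!]:\Phi\to\mathcal Q$ be an interpretation into an orthomodular lattice $\mathcal Q$. If for all formulas $\phi,\psi$ we have $[\![\phi\wedge\psi]\!]=[\![\phi]\!]\wedge[\![\psi]\!]$, $[\![\phi\rightarrow\psi]\!]=[\![\phi]\!]\rightarrow[\![\psi]\!]$, and $[\![\neg\phi]\!]=\neg[\![\phi]\!]$, then all the rules of inference of $NOM$ are sound in this interpretation.
   Context: The propositional deductive system $NOM$: formulas are built from propositional letters using $\wedge$, $\rightarrow$, $\neg$. Sequents are $\phi_1,\ldots,\phi_n\vdash\psi$ ($n\ge0$) with antecedent a finite ordered sequence. With $\Gamma$ a finite possibly empty sequence of formulas and $\phi,\psi,\chi$ formulas, the rules of $NOM$ are: (assumption) $\Gamma,\phi\vdash\phi$; (cut) $\Gamma\vdash\phi$, $\Gamma,\phi\vdash\psi$ $\Rightarrow$ $\Gamma\vdash\psi$; (paste) $\Gamma\vdash\phi$, $\Gamma\vdash\psi$ $\Rightarrow$ $\Gamma,\phi\vdash\psi$; (compatible exchange) $\Gamma,\phi,\psi\vdash\phi$, $\Gamma,\phi,\psi\vdash\chi$, $\Gamma,\psi,\phi\vdash\psi$ $\Rightarrow$ $\Gamma,\psi,\phi\vdash\chi$; ($\wedge$-intro) $\Gamma\vdash\phi$, $\Gamma\vdash\psi$ $\Rightarrow$ $\Gamma\vdash\phi\wedge\psi$; ($\wedge$-elim) $\Gamma\vdash\phi\wedge\psi$ $\Rightarrow$ $\Gamma\vdash\phi$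 and $\Rightarrow$ $\Gamma\vdash\psi$; ($\rightarrow$-intro) $\Gamma,\phi\vdash\psi$ $\Rightarrow$ $\Gamma\vdash\phi\rightarrow\psi$; ($\rightarrow$-elim) $\Gamma\vdash\phi\rightarrow\psi$ $\Rightarrow$ $\Gamma,\phi\vdash\psi$; (excluded middle) $\Gamma,\phi\vdash\psi$, $\Gamma,\neg\phi\vdash\psi$ $\Rightarrow$ $\Gamma\vdash\psi$; (explosion) $\Gamma\vdash\neg\phi$ $\Rightarrow$ $\Gamma,\phi\vdash\psi$. An orthomodular lattice is a bounded lattice with an order-reversing involution $\neg$ satisfying $a\wedge\neg a=\bot$, $a\vee\neg a=\top$, and $a\le b\Rightarrow a\vee(\neg a\wedge b)=b$. In it, $a\mathbin{\&}b=(a\vee\neg b)\wedge b$ and $a\rightarrow b=\neg a\vee(a\wedge b)$; $\&$ associates to the left and $a_1\mathbin{\&}\cdots\mathbin{\&}a_n=\top$ when $n=0$. An interpretation is any function $[\![\cdot]\!]:\Phi\to\mathcal Q$ into an orthomodular lattice. A sequent $\phi_1,\ldots,\phi_n\vdash\psi$ is true in it if $[\![\phi_1]\!]\mathbin{\&}\cdots\mathbin{\&}[\![\phi_n]\!]\le[\![\psi]\!]$; a rule of inference is sound if, in every instance, its conclusion is true whenever all its premises are true. *)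

(* Defs.v *)
From mathcomp Require Import all_boot all_order.
Set Implicit Arguments.
Unset Strict Implicit.
Unset Printing Implicit Defensive.
Import Order.TTheory.
Local Open Scope order_scope.

Inductive form : Type :=
  | Var : nat -> form
  | And : form -> form -> form
  | Imp : form -> form -> form
  | Neg : form -> form.

Record sequent : Type := Seq { ante : seq form; succ : form }.

(** The rules of NOM, as a relation between the list of premises and the
    conclusion of each rule instance.  "Gamma, phi" is  rcons Gamma phi. *)
Inductive nom_rule : seq sequent -> sequent -> Prop :=
  | r_assumption G p :
      nom_rule [::] (Seq (rcons G p) p)
  | r_cut G p q :
      nom_rule [:: Seq G p; Seq (rcons G p) q] (Seq G q)
  | r_paste G p q :
      nom_rule [:: Seq G p; Seq G q] (Seq (rcons G p) q)
  | r_compat_exchange G p q c :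
      nom_rule [:: Seq (rcons (rcons G p) q) p;
                   Seq (rcons (rcons G p) q) c;
                   Seq (rcons (rcons G q) p) q]
               (Seq (rcons (rcons G q) p) c)
  | r_and_intro G p q :
      nom_rule [:: Seq G p; Seq G q] (Seq G (And p q))
  | r_and_elim1 G p q :
      nom_rule [:: Seq G (And p q)] (Seq G p)
  | r_and_elim2 G p q :
      nom_rule [:: Seq G (And p q)] (Seq G q)
  | r_imp_intro G p q :
      nom_rule [:: Seq (rcons G p) q] (Seq G (Imp p q))
  | r_imp_elim G p q :
      nom_rule [:: Seq G (Imp p q)] (Seq (rcons G p) q)
  | r_excluded_middle G p q :
      nom_rule [:: Seq (rcons G p) q; Seq (rcons G (Neg p)) q] (Seq G q)
  | r_explosion G p q :
      nom_rule [:: Seq G (Neg p)] (Seq (rcons G p) q).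

Record orthomodular {d : Order.disp_t} (L : tbLatticeType d) (neg : L -> L)
  : Prop := {
  om_invol : forall a, neg (neg a) = a;
  om_antitone : forall a b, a <= b -> neg b <= neg a;
  om_meet_compl : forall a, a `&` neg a = \bot;
  om_join_compl : forall a, a `|` neg a = \top;
  om_modular : forall a b, a <= b -> a `|` (neg a `&` b) = b
}.

Fixpoint inseq (S : sequent) (l : seq sequent) : Prop :=
  match l with [::] => False | T :: l' => T = S \/ inseq S l' end.

Section OMops.
Context {d : Order.disp_t} {L : tbLatticeType d} (neg : L -> L).

Definition amp (a b : L) : L := (a `|` neg b) `&` b.

Definition ompl_imp (a b : L) : L := neg a `|` (a `&` b).

Definition amp_seq (s : seq L) : L :=
  match s with
  | [::] => \top
  | a :: s' => foldl amp a s'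
  end.

Definition seq_true (I : form -> L) (S : sequent) : Prop :=
  amp_seq (map I (ante S)) <= I (succ S).

Definition nom_rules_sound (I : form -> L) : Prop :=
  forall prems concl, nom_rule prems concl ->
    (forall S, inseq S prems -> seq_true I S) -> seq_true I concl.
End OMops.

(* Main.v *)
Require Import Defs.
From mathcomp Require Import all_boot all_order.
Import Order.TTheory.
Local Open Scope order_scope.

Section OML.
Context {d : Order.disp_t} {L : tbLatticeType d} {neg : L -> L}
  (HL : orthomodular neg).

Lemma negK a : neg (neg a) = a. Proof. apply (om_invol HL). Qed.
Lemma neg_le {a b} : a <= b -> neg b <= neg a. Proof. apply (om_antitone HL). Qed.
Lemma neg_leE a b : (neg a <= neg b) = (b <= a).
Proof.
apply/idP/idP => h; last exact: neg_le.
by rewrite -(negK a) -(negK b); apply: neg_le.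
Qed.

Lemma negU x y : neg (x `|` y) = neg x `&` neg y.
Proof.
apply: le_anti; rewrite lexI !neg_le ?leUl ?leUr //=.
rewrite -neg_leE negK leUx; apply/andP; split.
  by rewrite -{1}(negK x) neg_leE leIl.
by rewrite -{1}(negK y) neg_leE leIr.
Qed.

Lemma negI x y : neg (x `&` y) = neg x `|` neg y.
Proof. by rewrite -(negK (neg x `|` neg y)) negU !negK. Qed.

Lemma om {x y} : x <= y -> x `|` (neg x `&` y) = y.
Proof. apply (om_modular HL). Qed.

Lemma omd {x y} : x <= y -> y `&` (neg y `|` x) = x.
Proof.
move=> h. have := om (neg_le h). rewrite negK => e.
by rewrite -[RHS]negK -e negU negI !negK.
Qed.

Lemma amp_le a b : amp neg a b <= b. Proof. exact: leIr. Qed.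

Lemma adj a b c : (amp neg a b <= c) <-> (a <= ompl_imp neg b c).
Proof.
rewrite /amp /ompl_imp; split => h.
- have e := om (leUr (neg b) a : neg b <= a `|` neg b). rewrite negK in e.
  apply: le_trans (leUl a (neg b)) _; rewrite -e leUx leUl /=.
    by apply: le_trans (leUr _ _); rewrite lexI leIl /= meetC.
- have e := omd (leIl b c).
  have h2 : (a `|` neg b) `&` b <= (neg b `|` (b `&` c)) `&` b.
    by rewrite lexI leIr andbT; apply: le_trans (leIl _ _) _; rewrite leUx h leUl.
  by apply: le_trans h2 _; rewrite meetC e leIr.
Qed.

Lemma amp_id {a b} : a <= b -> amp neg a b = a.
Proof. by move=> h; rewrite /amp meetC joinC omd. Qed.

Lemma ampT b : amp neg \top b = b.
Proof. by rewrite /amp join1x meet1x. Qed.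

Lemma imp_sub b c e : c <= b ->
  ompl_imp neg b (ompl_imp neg c e) = ompl_imp neg c e.
Proof.
move=> h; rewrite {1}/ompl_imp.
have h2 : neg b <= ompl_imp neg c e by rewrite /ompl_imp (le_trans (neg_le h)) ?leUl.
by have := om h2; rewrite negK.
Qed.

Lemma amp_sub a b c : c <= b -> amp neg (amp neg a b) c = amp neg a c.
Proof.
move=> h; apply: le_anti; apply/andP; split.
- have r := lexx (amp neg a c).
  move/adj: r; rewrite -(imp_sub _ _ _ h) => r.
  by apply/adj; apply/adj.
- have r := lexx (amp neg (amp neg a b) c).
  move/adj/adj: r; rewrite (imp_sub _ _ _ h) => r.
  by apply/adj.
Qed.

Lemma compat g p q : amp neg (amp neg g p) q <= p ->
  amp neg (amp neg g p) q = amp neg g (p `&` q).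
Proof.
move=> h.
rewrite -[RHS](amp_sub g p (p `&` q) (leIl _ _)).
rewrite -(amp_sub (amp neg g p) q (p `&` q) (leIr _ _)).
have hu : amp neg (amp neg g p) q <= p `&` q by rewrite lexI h amp_le.
by rewrite (amp_id hu).
Qed.

Lemma amp_seq_rcons (s : seq L) x : amp_seq neg (rcons s x) = amp neg (amp_seq neg s) x.
Proof. by case: s => [|a s] /=; [rewrite ampT | rewrite foldl_rcons]. Qed.

End OML.

Theorem theorem3p5 (d : Order.disp_t) (L : tbLatticeType d) (neg : L -> L)
  (HL : orthomodular neg) (I : form -> L)
  (Hand : forall p q, I (And p q) = I p `&` I q)
  (Himp : forall p q, I (Imp p q) = ompl_imp neg (I p) (I q))
  (Hneg : forall p, I (Neg p) = neg (I p)) :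
  nom_rules_sound neg I.
Proof.
move=> prems concl []; rewrite /seq_true /=.
- by move=> G p _; rewrite map_rcons amp_seq_rcons amp_le.
- move=> G p q Hp.
  have h1 := Hp _ (or_introl erefl). have h2 := Hp _ (or_intror (or_introl erefl)).
  rewrite /seq_true /= map_rcons amp_seq_rcons in h1 h2.
  by rewrite -(amp_id HL h1).
- move=> G p q Hp.
  have h1 := Hp _ (or_introl erefl). have h2 := Hp _ (or_intror (or_introl erefl)).
  rewrite /seq_true /= in h1 h2.
  by rewrite map_rcons amp_seq_rcons (amp_id HL h1).
- move=> G p q c Hp.
  have h1 := Hp _ (or_introl erefl). have h2 := Hp _ (or_intror (or_introl erefl)).
  have h3 := Hp _ (or_intror (or_intror (or_introl erefl))).
  rewrite /seq_true /= !map_rcons !amp_seq_rcons in h1 h2 h3 *.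
  by rewrite (compat HL _ _ _ h3) meetC -(compat HL _ _ _ h1).
- move=> G p q Hp.
  have h1 := Hp _ (or_introl erefl). have h2 := Hp _ (or_intror (or_introl erefl)).
  rewrite /seq_true /= in h1 h2.
  by rewrite Hand lexI h1 h2.
- move=> G p q Hp. have h1 := Hp _ (or_introl erefl).
  rewrite /seq_true /= Hand in h1. exact: le_trans h1 (leIl _ _).
- move=> G p q Hp. have h1 := Hp _ (or_introl erefl).
  rewrite /seq_true /= Hand in h1. exact: le_trans h1 (leIr _ _).
- move=> G p q Hp. have h1 := Hp _ (or_introl erefl).
  rewrite /seq_true /= map_rcons amp_seq_rcons in h1.
  by rewrite Himp; apply/(adj HL).
- move=> G p q Hp. have h1 := Hp _ (or_introl erefl).
  rewrite /seq_true /= Himp in h1.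
  by rewrite map_rcons amp_seq_rcons; apply/(adj HL).
- move=> G p q Hp.
  have h1 := Hp _ (or_introl erefl). have h2 := Hp _ (or_intror (or_introl erefl)).
  rewrite /seq_true /= !map_rcons !amp_seq_rcons Hneg in h1 h2.
  move/(adj HL): h1; move/(adj HL): h2; rewrite /ompl_imp (negK HL).
  set g := amp_seq neg _ => h2 h1.
  set P := I p; set Q := I q.
  set A := neg P `|` (P `&` Q). set B := P `|` (neg P `&` Q).
  set s := (P `&` Q) `|` (neg P `&` Q).
  have sA : s <= A `&` B.
    rewrite /s /A /B lexI; apply/andP; split; rewrite leUx; apply/andP; split;
      by [apply: leUr | apply: le_trans (leIl _ _) (leUl _ _)].
  have eA : neg (P `&` Q) `&` A = neg P.
    have hx : neg P <= neg (P `&` Q) by apply: (neg_le HL); apply: leIl.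
    by have := omd HL hx; rewrite (negK HL) /A joinC.
  have eB : neg (neg P `&` Q) `&` B = P.
    have hx : P <= neg (neg P `&` Q).
      by rewrite -{1}(negK HL P); apply: (neg_le HL); apply: leIl.
    by have := omd HL hx; rewrite (negK HL) /B joinC.
  have e0 : neg s `&` (A `&` B) = \bot.
    rewrite /s (negU HL) meetACA eA eB meetC; apply (om_meet_compl HL).
  have := om HL sA; rewrite e0 joinx0 => e.
  apply: le_trans (_ : A `&` B <= Q); first by rewrite lexI h1 h2.
  by rewrite -e leUx !leIr.
- move=> G p q Hp. have h1 := Hp _ (or_introl erefl).
  rewrite /seq_true /= Hneg in h1.
  rewrite map_rcons amp_seq_rcons /amp (join_idPr h1) meetC (om_meet_compl HL).
  exact: le0x.
Qed.
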